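(* Let $m\ge 1$, $S=\{1,\dots,2m+1\}$, $x_0=\{1,\dots,m\}$. For subsets $y,z\subseteq S$ put $\varrho(y,z)=(|x_0\cap y|,\,|x_0\cap z|,\,|y\cap z|,\,|x_0\cap y\cap z|)$. For $a,b\in\{m,m+1\}$ let $\mathcal{I}_{(a,b)}=\{\varrho(y,z): y\in\binom{S}{a},\ z\in\binom{S}{b}\}$. Then: (i) $\mathcal{I}_{(m,m)}$ is the set of integer four-tuples $(i,j,t,p)$ with $0\le i,j\le m$, $\max\{i+j-m,\,m-1-i-j\}\le t\le m-|i-j|$, and $\max\{0,\,i+j-m,\,i+t-m,\,j+t-m\}\le p\le \min\{i,\,j,\,t,\,i+j+t+1-m\}$. (ii) $\mathcal{I}_{(m,m+1)}$ is the set of integer four-tuples $(i,j,t,p)$ with $0\le i,j\le m$, $|i+j-m|\le t\le m-\max\{i-j,\,j-i-1\}$, and $i-\min\{i,\,m-j,\,m-t,\,i-j-t+m+1\}\le p\le i-\max\{0,\,i-j,\,i-t,\,m-j-t\}$. (iii) $\mathcal{I}_{(m+1,m)}$ is the set of integer four-tuples $(i,j,t,p)$ with $0\le i,j\le m$, $|i+j-m|\le t\le m-\max\{i-j-1,\,j-i\}$, and $j-\min\{m-i,\,j,\,m-t,\,j-i-t+m+1\}\le p\le j-\max\{0,\,j-i,\,j-t,\,m-i-t\}$. (iv) $\mathcal{I}_{(m+1,m+1)}$ is the set of integer four-tuples $(i,j,t,p)$ with $0\le i,j\le m$, $1+\max\{i+j-m-1,\,m-i-j\}\le t\le m+1-|i-j|$,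 and $i+j-m+\max\{0,\,m-i-j,\,t-i-1,\,t-j-1\}\le p\le i+j-m+\min\{m-i,\,m-j,\,t-1,\,m-i-j+t\}$. Moreover, each of the four sets $\mathcal{I}_{(m,m)},\mathcal{I}_{(m,m+1)},\mathcal{I}_{(m+1,m)},\mathcal{I}_{(m+1,m+1)}$ has cardinality $\binom{m+4}{4}$.
   Context: $\binom{S}{a}$ denotes the collection of $a$-element subsets of $S$. *)

(* Defs.v *)
From HB Require Import structures.
From mathcomp Require Import all_boot all_order all_algebra.
Set Implicit Arguments. Unset Strict Implicit. Unset Printing Implicit Defensive.
Import Order.TTheory GRing.Theory Num.Theory.

(* S = {1,...,2m+1} is modelled by 'I_(2m+1) = {0,...,2m} (shift by one);
   x0 = {1,...,m} becomes {0,...,m-1}. *)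
Definition x0 (m : nat) : {set 'I_(2 * m + 1)} := [set i : 'I_(2 * m + 1) | (i < m)%N].

Definition rho (m : nat) (y z : {set 'I_(2 * m + 1)}) : int * int * int * int :=
  (Posz #|x0 m :&: y|, Posz #|x0 m :&: z|, Posz #|y :&: z|, Posz #|x0 m :&: y :&: z|).

Definition ksubsets (m a : nat) : {set {set 'I_(2 * m + 1)}} :=
  [set y : {set 'I_(2 * m + 1)} | #|y| == a].

(* I_(a,b) = { rho(y,z) : y in binom(S,a), z in binom(S,b) }, as a duplicate-free
   list, so that its size is its cardinality *)
Definition Iset (m a b : nat) : seq (int * int * int * int) :=
  undup [seq rho y z | y <- enum (ksubsets m a), z <- enum (ksubsets m b)].

(* Main.v *)
Require Import Defs.
From HB Require Import structures.
From mathcomp Require Import all_boot all_order all_algebra.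
From mathcomp Require Import zify.
Import Order.TTheory GRing.Theory Num.Theory.
Set Warnings "-notation-overridden".

Lemma cnt_iota (c1 c2 c3 L : nat) : (c1 <= c2 <= c3)%N ->
  count (fun k => (k < c1) || ((c2 <= k) && (k < c3)))%N (iota 0 L)
  = (minn c1 L + minn c3 L - minn c2 L)%N.
Proof.
move=> h; elim: L => [|L IH]; first by rewrite /= !minn0.
rewrite -addn1 iotaD count_cat IH /= add0n addn0.
case: (ltnP L c1); case: (leqP c2 L); case: (ltnP L c3) => /=; lia.
Qed.

Lemma card_setP (n : nat) (P : pred nat) :
  #|[set k : 'I_n | P k]| = count P (iota 0 n).
Proof.
rewrite -val_enum_ord count_map cardsE cardE /enum_mem size_filter.
by rewrite (@eq_filter _ _ predT) // filter_predT.
Qed.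

Lemma count_split (m : nat) (P : pred nat) :
  count P (iota 0 (2 * m + 1)) =
  (count P (iota 0 m) + count (fun k => P (m + k)) (iota 0 (m + 1)))%N.
Proof.
have -> : (2 * m + 1 = m + (m + 1))%N by lia.
by rewrite iotaD count_cat add0n -{2}(addn0 m) iotaDl count_map.
Qed.

Ltac cnt m c1 c2 c3 :=
  rewrite (@eq_in_count _ _ (fun k => (k < c1) || ((c2 <= k) && (k < c3)))%N);
  [ rewrite cnt_iota; [| lia] | 
    let k := fresh "k" in let hk := fresh "hk" in
    let E := fresh "E" in move=> k; rewrite mem_iota => hk /=;
    first [ have E : (k < m)%N = true by lia | have E : (m + k < m)%N = false by lia ];
    rewrite ?E; lia ].

Lemma realize (m A0 A1 A2 A3 B0 B1 B2 B3 : nat) :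
  (A0 + A1 + A2 + A3 = m)%N -> (B0 + B1 + B2 + B3 = m + 1)%N ->
  exists y z : {set 'I_(2 * m + 1)},
    #|y| = (A0 + A1 + B0 + B1)%N /\ #|z| = (A0 + A2 + B0 + B2)%N /\
        #|x0 m :&: y| = (A0 + A1)%N /\ #|x0 m :&: z| = (A0 + A2)%N /\
        #|y :&: z| = (A0 + B0)%N /\ #|x0 m :&: y :&: z| = A0.
Proof.
move=> hA hB.
pose PY := fun k : nat => if (k < m)%N then (k < A0 + A1)%N else (k - m < B0 + B1)%N.
pose PZ := fun k : nat => if (k < m)%N then (k < A0) || (A0 + A1 <= k < A0 + A1 + A2)
   else (k - m < B0) || (B0 + B1 <= k - m < B0 + B1 + B2).
exists [set k : 'I_(2 * m + 1) | PY k], [set k : 'I_(2 * m + 1) | PZ k].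
pose PXY := fun k : nat => (k < m) && PY k.
pose PXZ := fun k : nat => (k < m) && PZ k.
pose PYZ := fun k : nat => PY k && PZ k.
pose PXYZ := fun k : nat => (k < m) && PY k && PZ k.
have -> : x0 m :&: [set k : 'I_(2 * m + 1) | PY k] = [set k : 'I_(2 * m + 1) | PXY k].
  by apply/setP => k; rewrite !inE.
have -> : x0 m :&: [set k : 'I_(2 * m + 1) | PZ k] = [set k : 'I_(2 * m + 1) | PXZ k].
  by apply/setP => k; rewrite !inE.
have -> : [set k : 'I_(2 * m + 1) | PY k] :&: [set k : 'I_(2 * m + 1) | PZ k]
   = [set k : 'I_(2 * m + 1) | PYZ k].
  by apply/setP => k; rewrite !inE.
have -> : [set k : 'I_(2 * m + 1) | PXY k] :&: [set k : 'I_(2 * m + 1) | PZ k]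
   = [set k : 'I_(2 * m + 1) | PXYZ k].
  by apply/setP => k; rewrite !inE.
split; [|split; [|split; [|split; [|split]]]]; rewrite card_setP count_split /PXY /PXZ /PYZ /PXYZ /PY /PZ.
- cnt m (A0 + A1) (A0 + A1) (A0 + A1). cnt m (B0 + B1) (B0 + B1) (B0 + B1). lia.
- cnt m A0 (A0 + A1) (A0 + A1 + A2). cnt m B0 (B0 + B1) (B0 + B1 + B2). lia.
- cnt m (A0 + A1) (A0 + A1) (A0 + A1). cnt m 0 0 0. lia.
- cnt m A0 (A0 + A1) (A0 + A1 + A2). cnt m 0 0 0. lia.
- cnt m A0 A0 A0. cnt m B0 B0 B0. lia.
- cnt m A0 A0 A0. cnt m 0 0 0. lia.
Qed.

Open Scope ring_scope.

Definition Q (m a b : nat) (i j t p : int) : Prop :=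
  [/\ 0 <= p, p <= i, p <= j, i + j - p <= Posz m &
   [/\ p <= t, i + t - p <= Posz a, j + t - p <= Posz b &
       Posz a + Posz b - i - j - t + p <= Posz m + 1]].

Lemma card_x0 m : #|x0 m| = m.
Proof.
rewrite /x0 (card_setP _ (fun k => k < m)%N).
rewrite (@eq_in_count _ _ (fun k => (k < m) || ((m <= k) && (k < m)))%N).
  rewrite cnt_iota; lia.
move=> k _ /=; lia.
Qed.

Lemma card_x0C m : #|~: x0 m| = (m + 1)%N.
Proof.
have := cardsC (x0 m); rewrite card_x0 card_ord; lia.
Qed.

Lemma forward n m (X y z : {set 'I_n}) : #|X| = m -> #|~: X| = (m + 1)%N ->
  let a := #|y| in let b := #|z| in
  let i := #|X :&: y| in let j := #|X :&: z| in
  let t := #|y :&: z| in let p := #|X :&: y :&: z| in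
  [/\ (p <= i)%N, (p <= j)%N, (i + j <= m + p)%N, (p <= t)%N &
   [/\ (i + t <= a + p)%N, (j + t <= b + p)%N &
       (a + b + p <= m + 1 + i + j + t)%N]].
Proof.
move=> hX hXC a b i j t p.
have eXYZ : X :&: y :&: z = (X :&: y) :&: (X :&: z).
  by apply/setP=> k; rewrite !inE; case: (k \in X); case: (k \in y); case: (k \in z).
have eXYZ2 : X :&: y :&: z = (X :&: y) :&: (y :&: z).
  by apply/setP=> k; rewrite !inE; case: (k \in X); case: (k \in y); case: (k \in z).
have eXYZ3 : X :&: y :&: z = (X :&: z) :&: (y :&: z).
  by apply/setP=> k; rewrite !inE; case: (k \in X); case: (k \in y); case: (k \in z).
have f1 : (p <= i)%N by apply: subset_leq_card; apply/subsetP=> k; rewrite !inE => /andP[/andP[-> ->]].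
have f2 : (p <= j)%N by apply: subset_leq_card; apply/subsetP=> k; rewrite !inE => /andP[/andP[-> _] ->].
have f4 : (p <= t)%N by apply: subset_leq_card; apply/subsetP=> k; rewrite !inE => /andP[/andP[_ ->] ->].
have f3 : (i + j <= m + p)%N.
  have := cardsUI (X :&: y) (X :&: z); rewrite -eXYZ -/i -/j -/p => <-.
  rewrite leq_add2r -hX; apply: subset_leq_card.
  by apply/subsetP=> k; rewrite !inE => /orP[/andP[-> _]|/andP[-> _]].
have f5 : (i + t <= a + p)%N.
  have := cardsUI (X :&: y) (y :&: z); rewrite -eXYZ2 -/i -/t -/p => <-.
  rewrite leq_add2r; apply: subset_leq_card.
  by apply/subsetP=> k; rewrite !inE => /orP[/andP[_ ->]|/andP[-> _]].
have f6 : (j + t <= b + p)%N.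
  have := cardsUI (X :&: z) (y :&: z); rewrite -eXYZ3 -/j -/t -/p => <-.
  rewrite leq_add2r; apply: subset_leq_card.
  by apply/subsetP=> k; rewrite !inE => /orP[/andP[_ ->]|/andP[_ ->]].
have f7 : (a + b + p <= m + 1 + i + j + t)%N.
  have hy := cardsID X y. have hz := cardsID X z. have hyz := cardsID X (y :&: z).
  have e1 : X :&: y = y :&: X by rewrite setIC.
  have e2 : X :&: z = z :&: X by rewrite setIC.
  have e3 : X :&: y :&: z = y :&: z :&: X.
    by apply/setP=> k; rewrite !inE; case: (k \in X); case: (k \in y); case: (k \in z).
  rewrite -e1 -/i -/a in hy. rewrite -e2 -/j -/b in hz. rewrite -e3 -/p -/t in hyz.
  have hU := cardsUI (y :\: X) (z :\: X).
  have e4 : (y :\: X) :&: (z :\: X) = y :&: z :\: X.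
    by apply/setP=> k; rewrite !inE; case: (k \in X); case: (k \in y); case: (k \in z).
  rewrite e4 in hU.
  have hsub : (#|y :\: X :|: z :\: X| <= m + 1)%N.
    rewrite -hXC; apply: subset_leq_card.
    by apply/subsetP=> k; rewrite !inE => /orP[/andP[-> _]|/andP[-> _]].
  lia.
by split.
Qed.

Lemma charac m a b (i j t p : int) :
  (i, j, t, p) \in Iset m a b <-> Q m a b i j t p.
Proof.
rewrite /Iset mem_undup; split.
  case/allpairsP => -[y z] /= [hy hz].
  rewrite /rho => -[-> -> -> ->].
  move: hy hz; rewrite !mem_enum !inE => /eqP ha /eqP hb.
  have := @forward _ m (x0 m) y z (card_x0 m) (card_x0C m).
  rewrite ha hb /= => -[f1 f2 f3 f4 [f5 f6 f7]].
  rewrite /Q; split; [lia|lia|lia|lia|split; lia].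
case=> h1 h2 h3 h4 [h5 h6 h7 h8].
have [y [z [hy [hz [hi [hj [ht hp]]]]]]] :=
  @realize m (absz (p)%R) (absz (i - p)%R) (absz (j - p)%R) (absz (Posz m - i - j + p)%R)
    (absz (t - p)%R) (absz (Posz a - i - t + p)%R) (absz (Posz b - j - t + p)%R)
    (absz (Posz m + 1 - Posz a - Posz b + i + j + t - p)%R) ltac:(lia) ltac:(lia).
apply/allpairsP; exists (y, z) => /=; split.
- by rewrite mem_enum inE; apply/eqP; lia.
- by rewrite mem_enum inE; apply/eqP; lia.
- rewrite /rho hi hj ht hp; congr (_, _, _, _); lia.
Qed.

Set Implicit Arguments. Unset Strict Implicit.

Definition uu (m : nat) (w : 5.-tuple 'I_m.+1) (k : nat) : nat := nth 0%N (map val w) k.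

Definition GG m (w : 5.-tuple 'I_m.+1) : int * int * int * int :=
  let s := ((uu w 4)./2)%N in
  (Posz (uu w 0 + uu w 2 + s), Posz (uu w 0 + uu w 1 + s), Posz (uu w 0 + uu w 3 + s),
   Posz (uu w 0 + odd (uu w 4) * s)).

Lemma tuple5 m (w : 5.-tuple 'I_m.+1) :
  map val w = [:: uu w 0; uu w 1; uu w 2; uu w 3; uu w 4].
Proof.
have : size (map val w) = 5%N by rewrite size_map size_tuple.
rewrite /uu; case: (map val w) => [|a [|b [|c [|d [|e [|f s]]]]]] //=.
Qed.

Lemma sum5 m (w : 5.-tuple 'I_m.+1) :
  (\sum_(k <- w) (k : nat) = uu w 0 + uu w 1 + uu w 2 + uu w 3 + uu w 4)%N.
Proof.
rewrite -(big_map val predT id) tuple5 !big_cons big_nil /=; lia.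
Qed.

Lemma tuple_eq m (w1 w2 : 5.-tuple 'I_m.+1) :
  (forall k, k \in [:: 0; 1; 2; 3; 4]%N -> uu w1 k = uu w2 k) -> w1 = w2.
Proof.
move=> h; apply: val_inj; apply: (inj_map val_inj).
by rewrite !tuple5 !h.
Qed.

Definition WW m := [set w : 5.-tuple 'I_m.+1 | \sum_(k <- w) (k : nat) == m].

Lemma GG_inj m : {in WW m &, injective (@GG m)}.
Proof.
move=> w1 w2; rewrite !inE !sum5 => /eqP h1 /eqP h2.
rewrite /GG => -[e1 e2 e3 e4].
have o1 := odd_double_half (uu w1 4). have o2 := odd_double_half (uu w2 4).
apply: tuple_eq => k hk.
move: e1 e2 e3 e4 o1 o2 h1 h2.
case: (odd (uu w1 4)); case: (odd (uu w2 4)); move=> /= e1 e2 e3 e4 o1 o2 h1 h2;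
 case: k hk => [|[|[|[|[|k]]]]] //= _; lia.
Qed.

Lemma GG_Q m (w : 5.-tuple 'I_m.+1) : w \in WW m ->
  let: (i, j, t, p) := GG w in Q m m m i j t p.
Proof.
rewrite inE sum5 => /eqP h. have o := odd_double_half (uu w 4).
rewrite /GG /Q; move: o; case: (odd (uu w 4)) => /= o; split; try lia; split; lia.
Qed.

Lemma odd_bd (b : bool) n : odd (b + n.*2) = b.
Proof. by rewrite oddD odd_double addbF; case: b. Qed.

Lemma mk5 m (n1 n2 n3 n4 s : nat) (b : bool) :
  (n1 + n2 + n3 + n4 + b + s.*2 = m)%N ->
  exists2 w, w \in WW m &
    GG w = (Posz (n1 + n3 + s), Posz (n1 + n2 + s), Posz (n1 + n4 + s), Posz (n1 + b * s)).
Proof.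
move=> h.
exists [tuple (inord n1 : 'I_m.+1); inord n2; inord n3; inord n4; inord (b + s.*2)].
  rewrite inE sum5 /uu /= !inordK; [apply/eqP; lia|lia..].
rewrite /GG /uu /= !inordK; try lia.
by rewrite half_bit_double odd_bd.
Qed.

Lemma GG_surj m (i j t p : int) : Q m m m i j t p ->
  exists2 w, w \in WW m & GG w = (i, j, t, p).
Proof.
case=> h1 h2 h3 h4 [h5 h6 h7 h8].
have [hx|hx] := lerP 0 (t + i + j - Posz m - 2 * p).
- have [w hw e] := @mk5 m (absz p) (absz (j - p - (t + i + j - Posz m - 2 * p))%R)
     (absz (i - p - (t + i + j - Posz m - 2 * p))%R) (absz (Posz m - i - j + p)%R)
     (absz (t + i + j - Posz m - 2 * p)%R) false ltac:(lia).
  exists w => //; rewrite e; congr (_, _, _, _); lia.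
- have [w hw e] := @mk5 m (absz (p - (Posz m + 2 * p - t - i - j - 1))%R)
     (absz (j - p)%R) (absz (i - p)%R) (absz (Posz m - i - j + p - 1 - (Posz m + 2 * p - t - i - j - 1))%R)
     (absz (Posz m + 2 * p - t - i - j - 1)%R) true ltac:(lia).
  exists w => //; rewrite e; congr (_, _, _, _); lia.
Qed.

Lemma size_mmm m : size (Iset m m m) = 'C(m + 4, 4).
Proof.
have := card_ord_partitions 4 m; rewrite addnC => <-.
rewrite cardE -(size_map (@GG m)); apply: perm_size; apply: uniq_perm.
- exact: undup_uniq.
- rewrite map_inj_in_uniq ?enum_uniq // => w1 w2; rewrite !mem_enum; exact: GG_inj.
move=> [[[i j] t] p]; apply/idP/idP.
- move/charac/GG_surj => [w hw e]; apply/mapP; exists w; rewrite ?mem_enum //.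
- case/mapP => w; rewrite mem_enum => hw e; apply/charac.
  by have := GG_Q hw; rewrite /GG; case: e => -> -> -> ->.
Qed.

Lemma size_transfer m a b a' b' (g : int * int * int * int -> int * int * int * int) :
  involutive g -> (forall v, (v \in Iset m a' b') = (g v \in Iset m a b)) ->
  size (Iset m a' b') = size (Iset m a b).
Proof.
move=> ginv h; rewrite -(size_map g); apply: perm_size; apply: uniq_perm.
- by rewrite (map_inj_uniq (inv_inj ginv)) undup_uniq.
- exact: undup_uniq.
move=> v; rewrite -{1}(ginv v) (mem_map (inv_inj ginv)) h ginv //.
Qed.

Local Open Scope ring_scope.

Theorem proposition3p1 (m : nat) (hm : (1 <= m)%N) :
  let M : int := Posz m in
  (* (i) *)
  (forall i j t p : int, (i, j, t, p) \in Iset m m m <->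
     [/\ 0 <= i <= M, 0 <= j <= M,
         Num.max (i + j - M) (M - 1 - i - j) <= t <= M - `|i - j|
       & Num.max (Num.max 0 (i + j - M)) (Num.max (i + t - M) (j + t - M)) <= p
         <= Num.min (Num.min i j) (Num.min t (i + j + t + 1 - M))]) /\
  (* (ii) *)
  (forall i j t p : int, (i, j, t, p) \in Iset m m m.+1 <->
     [/\ 0 <= i <= M, 0 <= j <= M,
         `|i + j - M| <= t <= M - Num.max (i - j) (j - i - 1)
       & i - Num.min (Num.min i (M - j)) (Num.min (M - t) (i - j - t + M + 1)) <= p
         <= i - Num.max (Num.max 0 (i - j)) (Num.max (i - t) (M - j - t))]) /\
  (* (iii) *)
  (forall i j t p : int, (i, j, t, p) \in Iset m m.+1 m <->
     [/\ 0 <= i <= M, 0 <= j <= M,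
         `|i + j - M| <= t <= M - Num.max (i - j - 1) (j - i)
       & j - Num.min (Num.min (M - i) j) (Num.min (M - t) (j - i - t + M + 1)) <= p
         <= j - Num.max (Num.max 0 (j - i)) (Num.max (j - t) (M - i - t))]) /\
  (* (iv) *)
  (forall i j t p : int, (i, j, t, p) \in Iset m m.+1 m.+1 <->
     [/\ 0 <= i <= M, 0 <= j <= M,
         1 + Num.max (i + j - M - 1) (M - i - j) <= t <= M + 1 - `|i - j|
       & i + j - M + Num.max (Num.max 0 (M - i - j)) (Num.max (t - i - 1) (t - j - 1)) <= p
         <= i + j - M + Num.min (Num.min (M - i) (M - j)) (Num.min (t - 1) (M - i - j + t))]) /\
  (* cardinalities *)
  [/\ size (Iset m m m) = 'C(m + 4, 4), size (Iset m m m.+1) = 'C(m + 4, 4),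
      size (Iset m m.+1 m) = 'C(m + 4, 4) & size (Iset m m.+1 m.+1) = 'C(m + 4, 4)].

Proof.
move=> M.
have gq : forall (g : int * int * int * int -> int * int * int * int) a b a' b',
   (forall i j t p, let: (i', j', t', p') := g (i, j, t, p) in
       Q m a' b' i j t p <-> Q m a b i' j' t' p') ->
   forall v, (v \in Iset m a' b') = (g v \in Iset m a b).
  move=> g a b a' b' hg [[[i j] t] p]; have := hg i j t p.
  case: (g (i, j, t, p)) => [[[i' j'] t'] p'] hh.
  by apply/idP/idP => /charac /hh /charac.
split; [|split; [|split; [|split]]].
- move=> i j t p; rewrite charac /Q /M; split;
    [case=> ? ? ? ? [] ? ? ? ?|case=> ? ? ? ?]; [split|split; [| | | |split]]; lia.
- move=> i j t p; rewrite charac /Q /M; split;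
    [case=> ? ? ? ? [] ? ? ? ?|case=> ? ? ? ?]; [split|split; [| | | |split]]; lia.
- move=> i j t p; rewrite charac /Q /M; split;
    [case=> ? ? ? ? [] ? ? ? ?|case=> ? ? ? ?]; [split|split; [| | | |split]]; lia.
- move=> i j t p; rewrite charac /Q /M; split;
    [case=> ? ? ? ? [] ? ? ? ?|case=> ? ? ? ?]; [split|split; [| | | |split]]; lia.
have e2 : size (Iset m m m.+1) = size (Iset m m m).
  apply: (@size_transfer _ _ _ _ _ (fun v => let: (i, j, t, p) := v in (i, M - j, M - t, i - p))).
    by move=> [[[i j] t] p] /=; congr (_, _, _, _); lia.
  apply: gq => i j t p; rewrite /Q /M; split;
    [case=> ? ? ? ? [] ? ? ? ?|case=> ? ? ? ? [] ? ? ? ?]; (split; [| | | |split]); lia.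
have e3 : size (Iset m m.+1 m) = size (Iset m m m).
  apply: (@size_transfer _ _ _ _ _ (fun v => let: (i, j, t, p) := v in (M - i, j, M - t, j - p))).
    by move=> [[[i j] t] p] /=; congr (_, _, _, _); lia.
  apply: gq => i j t p; rewrite /Q /M; split;
    [case=> ? ? ? ? [] ? ? ? ?|case=> ? ? ? ? [] ? ? ? ?]; (split; [| | | |split]); lia.
have e4 : size (Iset m m.+1 m.+1) = size (Iset m m.+1 m).
  apply: (@size_transfer _ _ _ _ _ (fun v => let: (i, j, t, p) := v in (i, M - j, M + 1 - t, i - p))).
    by move=> [[[i j] t] p] /=; congr (_, _, _, _); lia.
  apply: gq => i j t p; rewrite /Q /M; split;
    [case=> ? ? ? ? [] ? ? ? ?|case=> ? ? ? ? [] ? ? ? ?]; (split; [| | | |split]); lia.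
by rewrite e4 e3 e2 size_mmm.
Qed.
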